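(* Let $0<\delta\le 1/2$. Let $A\subset\mathbb{R}^d$ be a finite nonempty set and $C\subset\mathbb{R}^d$ a finite nonempty set of centers. For $a\in A$ let $D(a) = \min_{c\in C}\|a-c\|$, and let $\mathcal{D}: A\to\mathbb{R}_{\ge0}$ satisfy $(1-\delta)D(a)\le\mathcal D(a)\le(1+\delta)D(a)$ for all $a\in A$, with $\sum_{a\in A}\mathcal D(a)^2>0$. Let $c$ be a random point of $A$ chosen with $\Pr[c=a_0] = \mathcal D(a_0)^2/\sum_{a\in A}\mathcal D(a)^2$. Then $$\mathbb{E}\big[\mathrm{cost}(A, C\cup\{c\})\big] \le 72\cdot OPT(A).$$
   Context: For a finite set $A$ and center set $C'$, $\mathrm{cost}(A,C') = \sum_{a\in A}\min_{c'\in C'}\|a-c'\|^2$. $OPT(A) = \sum_{a\in A}\|a-\mu(A)\|^2$ where $\mu(A) = \frac1{|A|}\sum_{a\in A}a$ is the centroid (the optimal $1$-means cost of $A$). *)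

(* Defs.v *)
From HB Require Import structures.
From mathcomp Require Import all_boot all_order all_algebra.
From mathcomp Require Import reals.
Set Implicit Arguments. Unset Strict Implicit. Unset Printing Implicit Defensive.
Import Order.TTheory GRing.Theory Num.Theory.
Local Open Scope ring_scope.

Section KMeansDefs.
Variables (R : realType) (d : nat).

Definition edist (x y : 'rV[R]_d) : R :=
  Num.sqrt (\sum_(i < d) (x ord0 i - y ord0 i) ^+ 2).

(* minimum of a (nonempty) list of reals; 0 on the empty list (never used) *)
Definition seqmin (s : seq R) : R :=
  if s is x :: s' then foldr Num.min x s' else 0.

Definition Dist (C : seq 'rV[R]_d) (a : 'rV[R]_d) : R :=
  seqmin [seq edist a c | c <- C].

Definition cost (A C' : seq 'rV[R]_d) : R :=
  \sum_(a <- A) seqmin [seq edist a c ^+ 2 | c <- C'].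

Definition centroid (A : seq 'rV[R]_d) : 'rV[R]_d :=
  (size A)%:R^-1 *: \sum_(a <- A) a.

Definition OPT (A : seq 'rV[R]_d) : R :=
  \sum_(a <- A) edist a (centroid A) ^+ 2.

End KMeansDefs.

(* Main.v *)
Require Import Defs.
From HB Require Import structures.
From mathcomp Require Import all_boot all_order all_algebra.
From mathcomp Require Import reals.
From mathcomp Require Import lra ring.
Import Order.TTheory GRing.Theory Num.Theory.
Set Implicit Arguments. Unset Strict Implicit.
Local Open Scope ring_scope.

Section H.
Variable R : realType.

Lemma foldr_min_mem (x : R) s : foldr Num.min x s \in x :: s.
Proof.
elim: s => [|y s IH] /=; first by rewrite inE.
rewrite minEle; case: ifP => _; first by rewrite !inE eqxx orbT.
move: IH; rewrite !inE => /orP[->|->] //; by rewrite !orbT.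
Qed.

Lemma foldr_min_le (x : R) s y : y \in x :: s -> foldr Num.min x s <= y.
Proof.
elim: s y => [|z s IH] y /=; first by rewrite inE => /eqP ->.
rewrite ge_min !inE => /orP[/eqP->|/orP[/eqP->|H]].
- by rewrite IH ?orbT // !inE eqxx.
- by rewrite lexx.
- by rewrite IH ?orbT // !inE H orbT.
Qed.

Lemma seqmin_mem (s : seq R) : s != [::] -> seqmin s \in s.
Proof. by case: s => // x s _; exact: foldr_min_mem. Qed.

Lemma seqmin_le (s : seq R) y : y \in s -> seqmin s <= y.
Proof. by case: s => // x s H; exact: foldr_min_le. Qed.

Lemma sum_const_seq (T : Type) (s : seq T) (c : R) :
  \sum_(a <- s) c = (size s)%:R * c.
Proof.
elim: s => [|x s IH]; first by rewrite big_nil mul0r.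
by rewrite big_cons IH /= -add1n natrD mulrDl mul1r.
Qed.

Lemma coord_identity (T : Type) (s : seq T) (x : T -> R) :
  (0 < size s)%N ->
  \sum_(a <- s) \sum_(b <- s) (x b - x a) ^+ 2 =
  2 * (size s)%:R * \sum_(a <- s) (x a - (size s)%:R^-1 * \sum_(b <- s) x b) ^+ 2.
Proof.
move=> Hn.
set n := (size s)%:R.
set X := \sum_(b <- s) x b.
set X2 := \sum_(b <- s) x b ^+ 2.
have nz : n != 0 by rewrite pnatr_eq0 -lt0n.
have E1 : forall a, \sum_(b <- s) (x b - x a) ^+ 2 = X2 - 2 * x a * X + n * x a ^+ 2.
  move=> a.
  rewrite (eq_bigr (fun b => x b ^+ 2 + (- (2 * x a) * x b + x a ^+ 2))); last by move=> b _; ring.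
  rewrite big_split /= big_split /= -mulr_sumr sum_const_seq -/n -/X -/X2.
  by rewrite mulNr addrA.
rewrite (eq_bigr _ (fun a _ => E1 a)).
rewrite big_split /= big_split /= sum_const_seq -/n.
rewrite -!mulr_sumr -/X2 sumrN -mulr_suml -mulr_sumr -/X.
have E2 : forall m, \sum_(a <- s) (x a - m) ^+ 2 = X2 - 2 * m * X + n * m ^+ 2.
  move=> m.
  rewrite (eq_bigr (fun b => x b ^+ 2 + (- (2 * m) * x b + m ^+ 2))); last by move=> b _; ring.
  rewrite big_split /= big_split /= -mulr_sumr sum_const_seq -/n -/X -/X2.
  by rewrite mulNr addrA.
rewrite E2; field; exact: nz.
Qed.

End H.

Section G.
Variables (R : realType) (d : nat).
Implicit Types (x y z a c : 'rV[R]_d) (C A : seq 'rV[R]_d).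

Lemma edist_ge0 x y : 0 <= edist x y.
Proof. exact: sqrtr_ge0. Qed.

Lemma edist_sq x y : edist x y ^+ 2 = \sum_(i < d) (x ord0 i - y ord0 i) ^+ 2.
Proof. by rewrite sqr_sqrtr // sumr_ge0 // => i _; exact: sqr_ge0. Qed.

Lemma tri_sq a0 a c : edist a0 c ^+ 2 <= 2 * edist a a0 ^+ 2 + 2 * edist a c ^+ 2.
Proof.
rewrite !edist_sq !mulr_sumr -big_split /=; apply: ler_sum => i _.
set u := a0 ord0 i; set v := a ord0 i; set w := c ord0 i.
have := sqr_ge0 (2 * v - u - w); nra.
Qed.

Lemma Dist_ex C a : C != [::] -> exists2 c, c \in C & Dist C a = edist a c.
Proof.
move=> HC; have : Dist C a \in [seq edist a c | c <- C].
  by apply: seqmin_mem; case: C HC.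
by case/mapP => c Hc ->; exists c.
Qed.

Lemma Dist_le C a c : c \in C -> Dist C a <= edist a c.
Proof. by move=> Hc; apply: seqmin_le; apply: map_f. Qed.

Lemma Dist_ge0 C a : C != [::] -> 0 <= Dist C a.
Proof. by move=> HC; case: (Dist_ex a HC) => c _ ->; exact: edist_ge0. Qed.

Lemma Dsq_tri C a0 a : C != [::] ->
  Dist C a0 ^+ 2 <= 2 * edist a a0 ^+ 2 + 2 * Dist C a ^+ 2.
Proof.
move=> HC; case: (Dist_ex a HC) => c Hc ->.
apply: le_trans (tri_sq a0 a c).
have h1 := Dist_le a0 Hc; have h2 := Dist_ge0 a0 HC.
by rewrite lerXn2r // ?nnegrE ?edist_ge0.
Qed.

Lemma cmin_le1 C a a0 : seqmin [seq edist a c ^+ 2 | c <- a0 :: C] <= edist a a0 ^+ 2.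
Proof. by apply: seqmin_le; rewrite inE eqxx. Qed.

Lemma cmin_le2 C a a0 : C != [::] ->
  seqmin [seq edist a c ^+ 2 | c <- a0 :: C] <= Dist C a ^+ 2.
Proof.
move=> HC; case: (Dist_ex a HC) => c Hc ->.
apply: seqmin_le; rewrite /= inE; apply/orP; right; by apply/mapP; exists c.
Qed.

Lemma cmin_ge0 C a a0 : 0 <= seqmin [seq edist a c ^+ 2 | c <- a0 :: C].
Proof.
have : seqmin [seq edist a c ^+ 2 | c <- a0 :: C] \in [seq edist a c ^+ 2 | c <- a0 :: C].
  exact: seqmin_mem.
by case/mapP => c _ ->; exact: sqr_ge0.
Qed.

Lemma sumP_identity A : A != [::] ->
  \sum_(a0 <- A) \sum_(a <- A) edist a a0 ^+ 2 = 2 * (size A)%:R * OPT A.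
Proof.
move=> HA.
have Hn : (0 < size A)%N by case: A HA.
rewrite /OPT.
under eq_bigr => a0 _ do (under eq_bigr => a _ do rewrite edist_sq; rewrite exchange_big /=).
rewrite exchange_big /=.
under [in RHS]eq_bigr => a _ do rewrite edist_sq.
rewrite [in RHS]exchange_big /= mulr_sumr; apply: eq_bigr => i _.
rewrite (coord_identity (fun a : 'rV[R]_d => a ord0 i) Hn).
congr (_ * _); apply: eq_bigr => a _.
by rewrite /centroid !mxE summxE.
Qed.

End G.
Lemma term_bound (R : realType) (n x y S T P c : R) : 0 < n -> 0 <= x -> 4 * x <= 9 * y ->
  T <= 4 * S -> 0 < T -> 0 < S -> n * y <= 2 * T + 2 * P -> 0 <= c -> c <= T -> c <= P ->
  x / S * c <= 36%:R / n * P.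
Proof.
move=> n0 x0 hxy hTS T0 S0 hny c0 cT cP.
set u := x / S.
have uS : u * S = x by rewrite /u divfK // gt_eqF.
have u0 : 0 <= u by rewrite /u divr_ge0 // ltW.
rewrite [36%:R / n * P]mulrAC ler_pdivlMr //.
have h1 : u * T <= 9 * y by nra.
have cn : 0 <= c * n by rewrite mulr_ge0 // ltW.
have h2 : u * c * n * T <= 9 * c * (n * y).
  have H := ler_wpM2r cn h1.
  have e1 : u * c * n * T = u * T * (c * n) by ring.
  have e2 : 9 * c * (n * y) = 9 * y * (c * n) by ring.
  by rewrite e1 e2.
have h3 : c * (2 * T + 2 * P) <= 4 * T * P by nra.
have h5 : 9 * c * (n * y) <= 9 * c * (2 * T + 2 * P) by nra.
have h4 : u * c * n * T <= 36%:R * P * T by lra.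
rewrite -(ler_pM2r T0); lra.
Qed.

Theorem mainTheorem5 (R : realType) (d : nat) (delta : R)
    (A C : seq 'rV[R]_d) (Dt : 'rV[R]_d -> R) :
  0 < delta -> delta <= 2^-1 ->
  uniq A -> A != [::] -> uniq C -> C != [::] ->
  (forall a, a \in A -> 0 <= Dt a) ->
  (forall a, a \in A ->
     (1 - delta) * Dist C a <= Dt a /\ Dt a <= (1 + delta) * Dist C a) ->
  0 < \sum_(a <- A) Dt a ^+ 2 ->
  \sum_(a0 <- A) (Dt a0 ^+ 2 / \sum_(a <- A) Dt a ^+ 2) * cost A (a0 :: C)
    <= 72%:R * OPT A.
Proof.
move=> dpos dle _ HA _ HC Dt0 HDt S0.
set S := \sum_(a <- A) Dt a ^+ 2 in S0 *.
set T := \sum_(a <- A) Dist C a ^+ 2.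
set n := (size A)%:R : R.
have n0 : 0 < n by rewrite ltr0n; case: A HA {S T S0 Dt0 HDt n}.
have hx : forall a, a \in A -> 4 * Dt a ^+ 2 <= 9 * Dist C a ^+ 2.
  move=> a Ha; have [h1 h2] := HDt a Ha; have h0 := Dt0 a Ha.
  have hD := Dist_ge0 a HC.
  have h3 : 2 * Dt a <= 3 * Dist C a.
    have : delta * Dist C a <= 2^-1 * Dist C a by rewrite ler_wpM2r.
    have : 2 * 2^-1 = 1 :> R by rewrite mulfV // pnatr_eq0.
    nra.
  nra.
have hy : forall a, a \in A -> Dist C a ^+ 2 <= 4 * Dt a ^+ 2.
  move=> a Ha; have [h1 h2] := HDt a Ha; have h0 := Dt0 a Ha.
  have hD := Dist_ge0 a HC.
  have h3 : Dist C a <= 2 * Dt a.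
    have : delta * Dist C a <= 2^-1 * Dist C a by rewrite ler_wpM2r.
    have : 2 * 2^-1 = 1 :> R by rewrite mulfV // pnatr_eq0.
    nra.
  nra.
have TS : T <= 4 * S.
  rewrite /T /S mulr_sumr big_seq [X in _ <= X]big_seq; apply: ler_sum => a Ha; exact: hy.
have ST : 4 * S <= 9 * T.
  rewrite /T /S !mulr_sumr big_seq [X in _ <= X]big_seq; apply: ler_sum => a Ha; exact: hx.
have T0 : 0 < T.
  move: S0 ST; clearbody S T; clear -S T; move=> S0 ST; lra.
apply: (le_trans (y := \sum_(a0 <- A) (36%:R / n * \sum_(a <- A) edist a a0 ^+ 2))).
  rewrite big_seq [X in _ <= X]big_seq; apply: ler_sum => a0 Ha0.
  apply: (term_bound (y := Dist C a0 ^+ 2) (T := T)) => //.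
  - exact: sqr_ge0.
  - exact: hx.
  - rewrite -sum_const_seq -/n /T mulr_sumr mulr_sumr -big_split /=.
    by apply: ler_sum => a _; rewrite addrC; exact: Dsq_tri.
  - by apply: sumr_ge0 => a _; exact: cmin_ge0.
  - by apply: ler_sum => a _; exact: cmin_le2.
  - by apply: ler_sum => a _; exact: cmin_le1.
rewrite -mulr_sumr sumP_identity // -/n.
have -> : 36%:R / n * (2 * n * OPT A) = 72%:R * OPT A :> R.
  rewrite [2 * n]mulrC -[n * 2 * _]mulrA -mulrA mulKf ?gt_eqF //.
  by rewrite mulrA -natrM.
by [].
Qed.
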